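(* Let $P\subseteq S_n$ be a permutation array with ${\rm hd}(P)\ge 4$. Then ${\rm hd}(P^{\sf CT})\le{\rm hd}(P)$.
   Context: $S_n$ is the symmetric group on $\{0,1,\ldots,n-1\}$. A permutation array is a non-empty subset $P\subseteq S_n$; ${\rm hd}(\sigma,\tau)=|\{x:\sigma(x)\neq\tau(x)\}|$ and ${\rm hd}(P)=\min\{{\rm hd}(\sigma,\tau):\sigma,\tau\in P,\ \sigma\neq\tau\}$. The contraction of $\sigma\in S_n$ is $\sigma^{\sf CT}\in S_{n-1}$ (on $\{0,\ldots,n-2\}$) defined by $\sigma^{\sf CT}(x)=\sigma(n-1)$ if $x=\sigma^{-1}(n-1)$ and $\sigma^{\sf CT}(x)=\sigma(x)$ otherwise (i.e. delete $n-1$ from the cycle notation of $\sigma$); $P^{\sf CT}=\{\sigma^{\sf CT}:\sigma\in P\}$. *)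

(* Defs.v *)
From mathcomp Require Import all_boot all_fingroup.
Set Implicit Arguments. Unset Strict Implicit. Unset Printing Implicit Defensive.

Definition hd (n : nat) (s t : {perm 'I_n}) : nat := #|[set x | s x != t x]|.

(* Minimum distance of a permutation array: minimum of hd over pairs of
   distinct elements (the default value n is only used when P has < 2
   elements, where the paper's hd(P) is undefined; the statement assumes
   #|P| >= 2). *)
Definition hdP (n : nat) (P : {set {perm 'I_n}}) : nat :=
  \big[minn/n]_(st in setX P P | st.1 != st.2) hd st.1 st.2.

(* Contraction: S_{m+1} -> S_m (points 0..m-1 are embedded via lift ord_max,
   i.e. with the same value; the point m = ord_max is deleted from the cycle
   notation). *)
Definition ct_fun (m : nat) (s : {perm 'I_m.+1}) (x : 'I_m) : 'I_m :=
  match unlift ord_max (s (lift ord_max x)) with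
  | Some z => z
  | None => match unlift ord_max (s ord_max) with
            | Some z => z
            | None => x
            end
  end.

Lemma ct_fun_inj (m : nat) (s : {perm 'I_m.+1}) : injective (ct_fun s).
Proof.
have nl : forall z : 'I_m, lift ord_max z != ord_max by move=> z; rewrite eq_sym neq_lift.
move=> x y; rewrite /ct_fun.
case: (unliftP ord_max (s (lift ord_max x))) => [a Ha|Hx];
case: (unliftP ord_max (s (lift ord_max y))) => [b Hb|Hy].
- by move=> eab; subst b; apply: (@lift_inj _ ord_max); apply: (@perm_inj _ s); rewrite Ha Hb.
- case: (unliftP ord_max (s ord_max)) => [c Hc|Hc] eac.
    subst c; case/eqP: (nl x); apply: (@perm_inj _ s); by rewrite Ha Hc.
  by case/eqP: (nl y); apply: (@perm_inj _ s); rewrite Hy Hc.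
- case: (unliftP ord_max (s ord_max)) => [c Hc|Hc] ecb.
    subst c; case/eqP: (nl y); apply: (@perm_inj _ s); by rewrite Hb Hc.
  by case/eqP: (nl x); apply: (@perm_inj _ s); rewrite Hx Hc.
- by move=> _; apply: (@lift_inj _ ord_max); apply: (@perm_inj _ s); rewrite Hx Hy.
Qed.

Definition contraction (m : nat) (s : {perm 'I_m.+1}) : {perm 'I_m} :=
  perm (@ct_fun_inj m s).

Definition contractionP (m : nat) (P : {set {perm 'I_m.+1}}) : {set {perm 'I_m}} :=
  [set contraction s | s in P].

(* Main.v *)
Require Import Defs.
From mathcomp Require Import all_boot all_fingroup.
Set Implicit Arguments. Unset Strict Implicit. Unset Printing Implicit Defensive.

Lemma lmn m (z : 'I_m) : (lift ord_max z == ord_max :> 'I_m.+1) = false.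
Proof. by apply/negbTE; rewrite eq_sym neq_lift. Qed.

Lemma ctE m (s : {perm 'I_m.+1}) x :
  lift ord_max (contraction s x) =
  if s (lift ord_max x) == ord_max then s ord_max else s (lift ord_max x).
Proof.
rewrite permE /ct_fun.
case: unliftP => [z Hz|Hz].
  by rewrite Hz lmn.
rewrite Hz eqxx.
case: unliftP => [c Hc|Hc]; first by rewrite Hc.
have : lift ord_max x = ord_max by apply: (@perm_inj _ s); rewrite Hz Hc.
by move/eqP; rewrite lmn.
Qed.

Lemma ct_neq m (s t : {perm 'I_m.+1}) x :
  (contraction s x != contraction t x) =
  (lift ord_max (contraction s x) != lift ord_max (contraction t x)).
Proof. by rewrite (inj_eq (@lift_inj _ ord_max)). Qed.

Lemma hd_ct m (s t : {perm 'I_m.+1}) :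
  hd (contraction s) (contraction t) <= hd s t.
Proof.
rewrite /hd.
set D' := [set x | _].
set f := fun x : 'I_m => if s (lift ord_max x) == t (lift ord_max x) then ord_max
                         else lift ord_max x.
have finj : {in D' &, injective f}.
  have key : forall x, x \in D' -> s (lift ord_max x) == t (lift ord_max x) ->
      s (lift ord_max x) = ord_max.
    move=> x; rewrite inE ct_neq !ctE => Hx /eqP E.
    move: Hx; rewrite E.
    by case: (t (lift ord_max x) =P ord_max); rewrite ?eqxx.
  move=> x y Hx Hy; rewrite /f.
  case: ifP => ex; case: ifP => ey.
  - move=> _; apply: (@lift_inj _ ord_max); apply: (@perm_inj _ s).
    by rewrite (key _ Hx ex) (key _ Hy ey).
  - by move=> /eqP; rewrite eq_sym lmn.
  - by move=> /eqP; rewrite lmn.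
  - by apply: lift_inj.
rewrite -(card_in_imset finj).
apply: subset_leq_card; apply/subsetP => y /imsetP [x Hx ->].
rewrite inE /f.
case: ifP => ex; last by rewrite ex.
move: Hx; rewrite inE ct_neq !ctE (eqP ex).
by case: ifP => // _; move/eqP.
Qed.

Lemma ct_eq_hd m (s t : {perm 'I_m.+1}) :
  contraction s = contraction t -> hd s t <= 3.
Proof.
move=> E; rewrite /hd.
apply: (@leq_trans #|[set ord_max; s^-1 ord_max; t^-1 ord_max]%g|).
  apply: subset_leq_card; apply/subsetP => y; rewrite !inE => Hy.
  case: (unliftP ord_max y) Hy => [x ->|->]; last by rewrite eqxx.
  move=> Hy.
  have := ctE s x; rewrite E ctE.
  case: (s (lift ord_max x) =P ord_max) => es.
    move=> _; apply/orP; left; apply/orP; right; apply/eqP.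
    by apply: (@perm_inj _ s); rewrite permKV es.
  case: (t (lift ord_max x) =P ord_max) => et.
    move=> _; apply/orP; right; apply/eqP.
    by apply: (@perm_inj _ t); rewrite permKV et.
  by move=> ee; move: Hy; rewrite ee eqxx.
apply: leq_trans (leq_card_setU _ _) _.
rewrite cardsU1 !cards1.
by case: (_ \notin _).
Qed.

Lemma bigmin_le (I : finType) (P : pred I) (F : I -> nat) d j :
  P j -> \big[minn/d]_(i | P i) F i <= F j.
Proof.
move=> Pj; rewrite unlock /reducebig.
have : j \in index_enum I by rewrite mem_index_enum.
elim: (index_enum I) => //= a r IH; rewrite inE => /orP [/eqP <-|jr].
  by rewrite Pj geq_minl.
case: (P a); last exact: IH.
by apply: leq_trans (geq_minr _ _) (IH jr).
Qed.

Lemma bigmin_ex (I : finType) (P : pred I) (F : I -> nat) d :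
  \big[minn/d]_(i | P i) F i = d \/
  exists i, P i /\ \big[minn/d]_(i | P i) F i = F i.
Proof.
apply: (big_ind (fun x => x = d \/ exists i, P i /\ x = F i)).
- by left.
- by move=> x y Hx Hy; rewrite /minn; case: ifP.
- by move=> i Pi; right; exists i.
Qed.

Lemma hdP_le_m m (Q : {set {perm 'I_m}}) : hdP Q <= m.
Proof.
rewrite /hdP.
case: (@bigmin_ex _ (fun st : {perm 'I_m} * {perm 'I_m} => (st \in setX Q Q) && (st.1 != st.2)) (fun st => hd st.1 st.2) m) => [->//|[st [_ ->]]].
by rewrite /hd; apply: leq_trans (max_card _) _; rewrite card_ord.
Qed.

Theorem corollary3p4 (m : nat) (P : {set {perm 'I_m.+1}}) :
  1 < #|P| -> 4 <= hdP P -> hdP (contractionP P) <= hdP P.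
Proof.
move=> _ H4.
have := H4; rewrite {1}/hdP.
case: (@bigmin_ex _ (fun st : {perm 'I_m.+1} * {perm 'I_m.+1} => (st \in setX P P) && (st.1 != st.2)) (fun st => hd st.1 st.2) m.+1) => [E _|[[s t] [/andP [Hst /= nst] E]] _].
  by rewrite /hdP E; apply: leq_trans (hdP_le_m _) (leqnSn _).
rewrite /hdP [X in _ <= X]E /=.
move: Hst; rewrite inE /= => /andP [sP tP].
have H4' : 4 <= hd s t by rewrite /hdP E in H4.
have ne : contraction s != contraction t.
  apply/eqP => ee; have := ct_eq_hd ee.
  by rewrite leqNgt (leq_trans _ H4').
apply: leq_trans (hd_ct s t).
apply: (@bigmin_le _ (fun st : {perm 'I_m} * {perm 'I_m} => (st \in setX (contractionP P) (contractionP P)) && (st.1 != st.2)) (fun st => hd st.1 st.2) m (contraction s, contraction t)).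
by rewrite /= ne inE /= /contractionP !(imset_f (@contraction m)) ?sP ?tP.
Qed.
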